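(* (Truth lemma) For every state $(\Delta,\pi,i)$ of the canonical model $\mathcal{M}^{Can}$ and every $\alpha\in\mathcal{L}_T$: $\mathcal{M}^{Can},(\Delta,\pi,i)\models\alpha$ if and only if $\alpha\in\Delta$.
   Context: $\mathcal{L}_T$: $\alpha::=\varphi\mid\varphi\rightsquigarrow\varphi\mid B(\alpha)\mid\alpha*\alpha\mid\neg\alpha$, with $\varphi$ ranging over classical propositional formulas (set $\mathcal{L}_{CL}$, built from variables, $\bot$ and classical connectives) and $*\in\{\land,\lor,\to,\leftrightarrow\}$. SBTrust is the Hilbert system ($\varphi,\psi,\chi,\varphi_i,\psi_i$ propositional; $\alpha,\beta\in\mathcal{L}_T$; rule outputs in $\mathcal{L}_T$): classical tautologies and Modus Ponens; $\varphi\rightsquigarrow\varphi$; $(\varphi\rightsquigarrow\bot)\to\neg\varphi$; $((\psi\land\chi)\rightsquigarrow\varphi)\to(\psi\rightsquigarrow(\chi\to\varphi))$; $(\neg(\varphi\leftrightarrow\psi)\rightsquigarrow\bot)\to((\varphi\rightsquigarrow\chi)\leftrightarrow(\psi\rightsquigarrow\chi))$; rule RCK: from $(\varphi_1\land\dots\land\varphi_n)\to\varphi_{n+1}$ infer $\bigwedge_{j\le n}(\psi\rightsquigarrow\varphi_j)\to(\psi\rightsquigarrow\varphi_{n+1})$; rule $\mathbf{S5_F}$: from $(\ell_1\land\dots\land\ell_n)\to\chi$ infer $(\ell_1\land\dots\land\ell_n)\to(\neg\chi\rightsquigarrow\bot)$, each $\ell_j$ being $\varphi_j\rightsquigarrow\psi_j$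 or its negation, $\chi$ propositional; $B(\alpha\to\beta)\to(B\alpha\to B\beta)$; $B\alpha\to\neg B\neg\alpha$; $B\alpha\to BB\alpha$; necessitation for $B$. MCS: $\Gamma\subseteq\mathcal{L}_T$ with $\Gamma\nvdash\bot$ and, for each $\alpha$, $\alpha\in\Gamma$ or $\neg\alpha\in\Gamma$. $\Gamma\leftrightsquigarrow\Delta$ iff the MCSs contain the same formulas of the form $\chi\rightsquigarrow\psi$; $[\Gamma]_\leftrightsquigarrow$ its class. $\rightsquigarrow_\varphi(\Gamma)=\{\psi:\varphi\rightsquigarrow\psi\in\Gamma\}$; $\Delta$ is $\varphi$-likely for $\Gamma$ if $\rightsquigarrow_\varphi(\Gamma)\subseteq\Delta$. $S_\Gamma=[\Gamma]_\leftrightsquigarrow\times\mathcal{L}_{CL}\times\{0,1,2\}$; $(\Delta,\varphi,i)\succeq_\Gamma(\Omega,\psi,j)$ iff ($\Delta$ is $\varphi$-likely for $\Gamma$ and $\varphi\in\Omega$) or ($i=1,j=0$) or ($i=2,j=1$) or ($i=0,j=2$). Fix a set $I$ containing exactly one representative of each $\leftrightsquigarrow$-class. The canonical model is $\mathcal{M}^{Can}=\langle S,(S_\Gamma)_{\Gamma\in I},(\succeq_\Gamma)_{\Gamma\in I},R,V\rangle$ with $S=\bigcup_{\Gamma\in I}S_\Gamma$, $V(p)=\{(\Delta,\varphi,i)\in S:p\in\Delta\}$, and $(\Delta,\varphi,i)R(\Omega,\psi,j)$ iff for all $\alpha\in\mathcal{L}_T$, $B(\alpha)\in\Delta\Rightarrow\alpha\in\Omega$.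 Truth in such a structure: $s\models p$ iff $s\in V(p)$; Boolean clauses as usual; $s\models\varphi\rightsquigarrow\psi$ iff $\mathit{most}(\|\varphi\|_\Gamma)\subseteq\|\psi\|_\Gamma$ where $s\in S_\Gamma$, $\|\varphi\|_\Gamma=\{v\in S_\Gamma:v\models\varphi\}$ and $\mathit{most}(X)=\{x\in X:\forall y\in X\,(y\succeq_\Gamma x\Rightarrow x\succeq_\Gamma y)\}$; $s\models B(\alpha)$ iff $v\models\alpha$ for all $v$ with $sRv$. *)

(* Defs.v *)
From Stdlib Require Import List.
Import ListNotations.

Inductive cl : Type :=
| CVar  : nat -> cl
| CBot  : cl
| CNeg  : cl -> cl
| CAnd  : cl -> cl -> cl
| COr   : cl -> cl -> cl
| CImp  : cl -> cl -> cl
| CIff  : cl -> cl -> cl.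

(* L_T.  Classical formulas are embedded via [emb] (below) so that each
   classical formula has a unique representation as an L_T formula. *)
Inductive fT : Type :=
| Var  : nat -> fT
| Bot  : fT
| Cnd  : cl -> cl -> fT
| Bx   : fT -> fT
| Conj : fT -> fT -> fT
| Disj : fT -> fT -> fT
| Impl : fT -> fT -> fT
| Iff  : fT -> fT -> fT
| Neg  : fT -> fT.

Fixpoint emb (p : cl) : fT :=
  match p with
  | CVar n => Var n
  | CBot => Bot
  | CNeg a => Neg (emb a)
  | CAnd a b => Conj (emb a) (emb b)
  | COr a b => Disj (emb a) (emb b)
  | CImp a b => Impl (emb a) (emb b)
  | CIff a b => Iff (emb a) (emb b)
  end.

Fixpoint teval (v : fT -> bool) (a : fT) : bool :=
  match a with
  | Bot => false
  | Conj a b => teval v a && teval v b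
  | Disj a b => teval v a || teval v b
  | Impl a b => implb (teval v a) (teval v b)
  | Iff a b => Bool.eqb (teval v a) (teval v b)
  | Neg a => negb (teval v a)
  | x => v x
  end.

Definition tautology (a : fT) : Prop := forall v, teval v a = true.

Fixpoint bigCAnd (p : cl) (ps : list cl) : cl :=
  match ps with
  | [] => p
  | q :: qs => CAnd p (bigCAnd q qs)
  end.

Fixpoint bigConj (a : fT) (l : list fT) : fT :=
  match l with
  | [] => a
  | b :: bs => Conj a (bigConj b bs)
  end.

Definition condConj (psi p : cl) (ps : list cl) : fT :=
  bigConj (Cnd psi p) (map (Cnd psi) ps).

Definition is_lit (l : fT) : Prop :=
  exists p q, l = Cnd p q \/ l = Neg (Cnd p q).

Inductive Prv : fT -> Prop :=
| Ax_taut : forall a, tautology a -> Prv a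
| R_MP : forall a b, Prv a -> Prv (Impl a b) -> Prv b
| Ax_id : forall p, Prv (Cnd p p)
| Ax_bot : forall p, Prv (Impl (Cnd p CBot) (Neg (emb p)))
| Ax_sh : forall p q r,
    Prv (Impl (Cnd (CAnd q r) p) (Cnd q (CImp r p)))
| Ax_eq : forall p q r,
    Prv (Impl (Cnd (CNeg (CIff p q)) CBot) (Iff (Cnd p r) (Cnd q r)))
| R_RCK : forall (p : cl) (ps : list cl) (pn1 psi : cl),
    Prv (emb (CImp (bigCAnd p ps) pn1)) ->
    Prv (Impl (condConj psi p ps) (Cnd psi pn1))
| R_S5F : forall (l : fT) (ls : list fT) (chi : cl),
    is_lit l -> Forall is_lit ls ->
    Prv (Impl (bigConj l ls) (emb chi)) ->
    Prv (Impl (bigConj l ls) (Cnd (CNeg chi) CBot))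
| Ax_K : forall a b, Prv (Impl (Bx (Impl a b)) (Impl (Bx a) (Bx b)))
| Ax_D : forall a, Prv (Impl (Bx a) (Neg (Bx (Neg a))))
| Ax_4 : forall a, Prv (Impl (Bx a) (Bx (Bx a)))
| R_Nec : forall a, Prv a -> Prv (Bx a).

Definition fset := fT -> Prop.

Definition derives (G : fset) (a : fT) : Prop :=
  exists l : list fT, (forall x, In x l -> G x) /\ Prv (fold_right Impl a l).

Definition MCS (G : fset) : Prop :=
  ~ derives G Bot /\ forall a, G a \/ G (Neg a).

Definition ceq (G D : fset) : Prop :=
  forall p q, G (Cnd p q) <-> D (Cnd p q).

Definition likely (G : fset) (p : cl) (D : fset) : Prop :=
  forall q, G (Cnd p q) -> D (emb q).

Inductive three : Type := i0 | i1 | i2.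

Record state : Type := St { st_D : fset; st_f : cl; st_i : three }.

(* s in S_Gamma  =  [Gamma] x L_CL x {0,1,2} *)
Definition inS (G : fset) (s : state) : Prop :=
  MCS (st_D s) /\ ceq (st_D s) G.

(* I contains exactly one representative of each <~~>-class *)
Definition rep_set (I : fset -> Prop) : Prop :=
  (forall G, I G -> MCS G) /\
  (forall D, MCS D -> exists G, I G /\ ceq D G) /\
  (forall G G', I G -> I G' -> ceq G G' -> forall a, G a <-> G' a).

Definition inSS (I : fset -> Prop) (s : state) : Prop :=
  exists G, I G /\ inS G s.

Definition geq (G : fset) (x y : state) : Prop :=
  (likely G (st_f x) (st_D x) /\ st_D y (emb (st_f x))) \/
  (st_i x = i1 /\ st_i y = i0) \/
  (st_i x = i2 /\ st_i y = i1) \/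
  (st_i x = i0 /\ st_i y = i2).

Definition most (G : fset) (X : state -> Prop) (x : state) : Prop :=
  X x /\ forall y, X y -> geq G y x -> geq G x y.

Definition Rel (s v : state) : Prop :=
  forall a, st_D s (Bx a) -> st_D v a.

Fixpoint satCL (s : state) (p : cl) : Prop :=
  match p with
  | CVar n => st_D s (Var n)
  | CBot => False
  | CNeg a => ~ satCL s a
  | CAnd a b => satCL s a /\ satCL s b
  | COr a b => satCL s a \/ satCL s b
  | CImp a b => satCL s a -> satCL s b
  | CIff a b => satCL s a <-> satCL s b
  end.

Definition ext (G : fset) (p : cl) (v : state) : Prop := inS G v /\ satCL v p.

Fixpoint sat (I : fset -> Prop) (s : state) (a : fT) : Prop :=
  match a with
  | Var n => st_D s (Var n)
  | Bot => False
  | Cnd p q =>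
      forall G, I G -> inS G s ->
        forall v, most G (ext G p) v -> ext G q v
  | Bx b => forall v, inSS I v -> Rel s v -> sat I v b
  | Conj a b => sat I s a /\ sat I s b
  | Disj a b => sat I s a \/ sat I s b
  | Impl a b => sat I s a -> sat I s b
  | Iff a b => sat I s a <-> sat I s b
  | Neg a => ~ sat I s a
  end.

Lemma satCL_emb I s p : sat I s (emb p) <-> satCL s p.
Proof.
  induction p; simpl; try tauto.
Qed.

(* Main.v *)
Require Import Defs.
From Stdlib Require Import List Bool Classical ClassicalEpsilon Cantor Lia.
Import ListNotations.

Ltac taut := let v := fresh "v" in intro v; simpl;
  repeat (match goal with |- context [teval v ?x] => destruct (teval v x) end);
  reflexivity.

Ltac inl := let x := fresh "x" in let H := fresh "H" in intros x H; simpl in H;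
  repeat (destruct H as [H|H]; [subst x|]); try contradiction; auto.

Lemma teval_fold v b l : teval v (fold_right Impl b l) = true <->
  ((forall x, In x l -> teval v x = true) -> teval v b = true).
Proof.
  induction l as [|a l IH]; simpl.
  - split; [auto|]. intros H; apply H; intros x [].
  - destruct (teval v a) eqn:Ha; simpl.
    + rewrite IH. split.
      * intros H H'; apply H; intros; apply H'; auto.
      * intros H H'; apply H; intros x [<-|Hx]; auto.
    + split; intros; auto. exfalso.
      assert (teval v a = true) by (apply H0; auto). congruence.
Qed.

Lemma teval_bigConj v a l : teval v (bigConj a l) = true <->
  teval v a = true /\ (forall x, In x l -> teval v x = true).
Proof.
  revert a; induction l as [|b l IH]; intros a; simpl.
  - split; [intros; split; auto; intros ? []| tauto].
  - rewrite andb_true_iff, IH. split.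
    + intros [Ha [Hb Hbs]]; split; auto. intros x [<-|Hx]; auto.
    + intros [Ha H]; split; auto.
Qed.

Lemma teval_bigCAnd v p ps : teval v (emb (bigCAnd p ps)) = true <->
  teval v (emb p) = true /\ (forall q, In q ps -> teval v (emb q) = true).
Proof.
  revert p; induction ps as [|b l IH]; intros p; simpl.
  - split; [intros; split; auto; intros ? []| tauto].
  - rewrite andb_true_iff, IH. split.
    + intros [Ha [Hb Hbs]]; split; auto. intros x [<-|Hx]; auto.
    + intros [Ha H]; split; auto.
Qed.

Lemma prv_mp_taut a b : Prv a -> tautology (Impl a b) -> Prv b.
Proof. intros H1 H2. exact (R_MP a b H1 (Ax_taut _ H2)). Qed.

Lemma mcs_derives D a : MCS D -> derives D a -> D a.
Proof.
  intros [Hc Hm] [l [Hl Hp]]. destruct (Hm a) as [|Hn]; auto. exfalso; apply Hc.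
  exists (Neg a :: l). split.
  - intros x [<-|Hx]; auto.
  - simpl. eapply prv_mp_taut; [exact Hp|]. intro v. simpl.
    destruct (teval v (fold_right Impl a l)) eqn:E1; simpl; auto.
    destruct (teval v a) eqn:E2; simpl; auto.
    apply teval_fold. rewrite teval_fold in E1. intros H. rewrite (E1 H) in E2; discriminate.
Qed.

Lemma mcs_tautology D l b : MCS D -> (forall x, In x l -> D x) ->
  tautology (fold_right Impl b l) -> D b.
Proof. intros HD Hl Ht. apply mcs_derives; auto. exists l; split; auto. apply Ax_taut; auto. Qed.

Lemma mcs_prv D a : MCS D -> Prv a -> D a.
Proof. intros HD Hp. apply mcs_derives; auto. exists []; split; auto. intros ? []. Qed.

Lemma mcs_nobot D : MCS D -> ~ D Bot.
Proof.
  intros [Hc _] H; apply Hc; exists [Bot]; split; [inl | apply Ax_taut; taut].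
Qed.

Lemma mcs_neg D a : MCS D -> (D (Neg a) <-> ~ D a).
Proof.
  intros HD. split.
  - intros H Ha. apply (mcs_nobot D HD). apply (mcs_tautology D [a; Neg a] Bot); auto; [inl|taut].
  - intros H. destruct (proj2 HD a); tauto.
Qed.

Lemma mcs_mp D a b : MCS D -> D (Impl a b) -> D a -> D b.
Proof. intros HD H1 H2. apply (mcs_tautology D [Impl a b; a] b); auto; [inl|taut]. Qed.

Lemma mcs_conj D a b : MCS D -> (D (Conj a b) <-> D a /\ D b).
Proof.
  intros HD; split.
  - intros H; split; [apply (mcs_tautology D [Conj a b] a)|apply (mcs_tautology D [Conj a b] b)]; auto; try inl; taut.
  - intros [H1 H2]; apply (mcs_tautology D [a; b]); auto; [inl|taut].
Qed.

Lemma mcs_disj D a b : MCS D -> (D (Disj a b) <-> D a \/ D b).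
Proof.
  intros HD; split.
  - intros H. destruct (classic (D a)) as [Ha|Ha]; auto. right.
    apply (mcs_neg D a HD) in Ha.
    apply (mcs_tautology D [Disj a b; Neg a]); auto; [inl|taut].
  - intros [H|H]; [apply (mcs_tautology D [a])|apply (mcs_tautology D [b])]; auto; try inl; taut.
Qed.

Lemma mcs_impl D a b : MCS D -> (D (Impl a b) <-> (D a -> D b)).
Proof.
  intros HD; split.
  - intros H Ha. eapply mcs_mp; eauto.
  - intros H. destruct (classic (D a)) as [Ha|Ha].
    + apply (mcs_tautology D [b]); auto; [inl|taut].
    + apply (mcs_neg D a HD) in Ha. apply (mcs_tautology D [Neg a]); auto; [inl|taut].
Qed.

Lemma mcs_iff D a b : MCS D -> (D (Iff a b) <-> (D a <-> D b)).
Proof.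
  intros HD; split.
  - intros H; split; intros H'.
    + apply (mcs_tautology D [Iff a b; a]); auto; [inl|taut].
    + apply (mcs_tautology D [Iff a b; b]); auto; [inl|taut].
  - intros H. destruct (classic (D a)) as [Ha|Ha].
    + assert (Hb : D b) by tauto. apply (mcs_tautology D [a; b]); auto; [inl|taut].
    + assert (Hb : ~ D b) by tauto.
      apply (mcs_neg D a HD) in Ha. apply (mcs_neg D b HD) in Hb.
      apply (mcs_tautology D [Neg a; Neg b]); auto; [inl|taut].
Qed.

Lemma satCL_mcs s p : MCS (st_D s) -> (satCL s p <-> st_D s (emb p)).
Proof.
  intros HD. induction p; simpl.
  - tauto.
  - split; [tauto| apply mcs_nobot; auto].
  - rewrite (mcs_neg _ _ HD). tauto.
  - rewrite (mcs_conj _ _ _ HD). tauto.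
  - rewrite (mcs_disj _ _ _ HD). tauto.
  - rewrite (mcs_impl _ _ _ HD). tauto.
  - rewrite (mcs_iff _ _ _ HD). tauto.
Qed.

Definition pr a b := Cantor.to_nat (a, b).
Lemma pr_inj a b c d : pr a b = pr c d -> a = c /\ b = d.
Proof.
  intros H; apply (f_equal Cantor.of_nat) in H; unfold pr in H.
  rewrite !Cantor.cancel_of_to in H. injection H; auto.
Qed.

Fixpoint encc (p : cl) : nat :=
  match p with
  | CVar n => pr 0 n
  | CBot => pr 1 0
  | CNeg a => pr 2 (encc a)
  | CAnd a b => pr 3 (pr (encc a) (encc b))
  | COr a b => pr 4 (pr (encc a) (encc b))
  | CImp a b => pr 5 (pr (encc a) (encc b))
  | CIff a b => pr 6 (pr (encc a) (encc b))
  end.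

Fixpoint encT (a : fT) : nat :=
  match a with
  | Var n => pr 0 n
  | Bot => pr 1 0
  | Cnd p q => pr 2 (pr (encc p) (encc q))
  | Bx a => pr 3 (encT a)
  | Conj a b => pr 4 (pr (encT a) (encT b))
  | Disj a b => pr 5 (pr (encT a) (encT b))
  | Impl a b => pr 6 (pr (encT a) (encT b))
  | Iff a b => pr 7 (pr (encT a) (encT b))
  | Neg a => pr 8 (encT a)
  end.

Lemma encc_inj : forall p q, encc p = encc q -> p = q.
Proof.
  induction p; destruct q; simpl; intros H; apply pr_inj in H; destruct H as [H1 H2];
    try discriminate H1;
    first [ congruence | solve [f_equal; auto]
          | (apply pr_inj in H2 as [H3 H4]; f_equal; auto) ].
Qed.

Lemma encT_inj : forall p q, encT p = encT q -> p = q.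
Proof.
  induction p; destruct q; simpl; intros H; apply pr_inj in H; destruct H as [H1 H2];
    try discriminate H1;
    first [ congruence | solve [f_equal; auto]
          | (apply pr_inj in H2 as [H3 H4]; f_equal; auto using encc_inj) ].
Qed.

Definition enumf (n : nat) : fT := epsilon (inhabits Bot) (fun a => encT a = n).
Lemma enumf_surj a : enumf (encT a) = a.
Proof.
  unfold enumf. apply encT_inj.
  apply (epsilon_spec (inhabits Bot) (fun a0 => encT a0 = encT a)). exists a; reflexivity.
Qed.

Lemma derives_mono (G G' : fset) a : (forall x, G x -> G' x) -> derives G a -> derives G' a.
Proof. intros H [l [Hl Hp]]. exists l; split; auto. Qed.

Lemma split2 (P Q : fT -> Prop) l : (forall x, In x l -> P x \/ Q x) ->
  exists lp lq, (forall x, In x lp -> P x) /\ (forall x, In x lq -> Q x) /\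
    (forall x, In x l -> In x lp \/ In x lq).
Proof.
  induction l as [|a l IH]; intros H.
  - exists [], []. split; [intros ? []|split; intros ? []].
  - destruct IH as [lp [lq [H1 [H2 H3]]]]; [intros; apply H; right; auto|].
    destruct (H a (or_introl eq_refl)) as [Pa|Qa].
    + exists (a :: lp), lq. split; [intros x [<-|Hx]; auto|split; auto].
      intros x [<-|Hx]; [left; left; auto|]. destruct (H3 x Hx); [left; right|right]; auto.
    + exists lp, (a :: lq). split; auto. split; [intros x [<-|Hx]; auto|].
      intros x [<-|Hx]; [right; left; auto|]. destruct (H3 x Hx); [left|right; right]; auto.
Qed.

Lemma deduction (G : fset) a b : derives (fun y => G y \/ y = a) b -> derives G (Impl a b).
Proof.
  intros [l [Hl Hp]].
  destruct (split2 G (fun y => y = a) l Hl) as [lp [lq [H1 [H2 H3]]]].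
  exists lp. split; auto.
  eapply prv_mp_taut; [exact Hp|]. intro v. simpl.
  destruct (teval v (fold_right Impl b l)) eqn:E1; simpl; [|reflexivity].
  apply teval_fold. intros Hlp. simpl.
  destruct (teval v a) eqn:Ea; simpl; auto.
  rewrite teval_fold in E1. apply E1. intros x Hx.
  destruct (H3 x Hx) as [Hy|Hy]; auto. rewrite (H2 x Hy); auto.
Qed.

Lemma derives_combine (G : fset) a b c : derives G a -> derives G b ->
  tautology (Impl a (Impl b c)) -> derives G c.
Proof.
  intros [l1 [Hl1 Hp1]] [l2 [Hl2 Hp2]] Ht.
  exists (l1 ++ l2). split.
  - intros x Hx; apply in_app_or in Hx; destruct Hx; auto.
  - apply (R_MP (fold_right Impl b l2)); auto.
    apply (R_MP (fold_right Impl a l1)); auto.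
    apply Ax_taut. intro v. simpl.
    destruct (teval v (fold_right Impl a l1)) eqn:E1; simpl; [|reflexivity].
    destruct (teval v (fold_right Impl b l2)) eqn:E2; simpl; [|reflexivity].
    apply teval_fold. intros Hall. rewrite teval_fold in E1, E2.
    specialize (Ht v). simpl in Ht.
    rewrite E1 in Ht by (intros; apply Hall; apply in_or_app; auto).
    rewrite E2 in Ht by (intros; apply Hall; apply in_or_app; auto).
    exact Ht.
Qed.

Fixpoint chain (Sg : fset) (n : nat) : fset :=
  match n with
  | O => Sg
  | S m => fun x => chain Sg m x \/
      (x = enumf m /\ ~ derives (fun y => chain Sg m y \/ y = enumf m) Bot) \/
      (x = Neg (enumf m) /\ derives (fun y => chain Sg m y \/ y = enumf m) Bot)
  end.

Lemma chain_cons Sg : ~ derives Sg Bot -> forall n, ~ derives (chain Sg n) Bot.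
Proof.
  intros H0 n. induction n; simpl; auto.
  destruct (classic (derives (fun y => chain Sg n y \/ y = enumf n) Bot)) as [Hd|Hnd].
  - intro H. apply IHn.
    assert (H2 : derives (fun y => chain Sg n y \/ y = Neg (enumf n)) Bot).
    { eapply derives_mono; [|exact H]. intros x [Hx|[[_ Hx]|[Hx _]]]; auto. contradiction. }
    apply deduction in H2. apply deduction in Hd.
    eapply derives_combine; [exact Hd|exact H2|taut].
  - intro H; apply Hnd. eapply derives_mono; [|exact H].
    intros x [Hx|[[Hx _]|[_ Hx]]]; auto. contradiction.
Qed.

Lemma chain_mono Sg m n : m <= n -> forall x, chain Sg m x -> chain Sg n x.
Proof. induction 1; auto. intros x Hx; simpl; left; auto. Qed.

Lemma lindenbaum (Sg : fset) : ~ derives Sg Bot -> exists O, MCS O /\ (forall x, Sg x -> O x).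
Proof.
  intros H0. exists (fun x => exists n, chain Sg n x). split; [split|].
  - intros [l [Hl Hp]].
    assert (HN : exists N, forall x, In x l -> chain Sg N x).
    { clear Hp. induction l as [|a l IH].
      - exists 0; intros ? [].
      - destruct (Hl a (or_introl eq_refl)) as [n Hn].
        destruct IH as [N HN]; [intros; apply Hl; right; auto|].
        exists (max n N). intros x [<-|Hx].
        + eapply chain_mono; [|exact Hn]. lia.
        + eapply chain_mono; [|apply HN; exact Hx]. lia. }
    destruct HN as [N HN]. apply (chain_cons Sg H0 N). exists l; split; auto.
  - intro a.
    destruct (classic (derives (fun y => chain Sg (encT a) y \/ y = enumf (encT a)) Bot)) as [Hd|Hnd];
      [right|left]; exists (S (encT a)); simpl; right; [right|left]; rewrite enumf_surj in *; split; auto.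
  - intros x Hx; exists 0; exact Hx.
Qed.

Definition lits (D : fset) (x : fT) : Prop := is_lit x /\ D x.

Lemma ceq_sym A B : ceq A B -> ceq B A.
Proof. intros H p q; specialize (H p q); tauto. Qed.
Lemma ceq_trans A B C : ceq A B -> ceq B C -> ceq A C.
Proof. intros H1 H2 p q; specialize (H1 p q); specialize (H2 p q); tauto. Qed.

Lemma lit_ceq D O : MCS D -> MCS O -> (forall x, lits D x -> O x) -> ceq O D.
Proof.
  intros HD HO H p q; split; intro Hc.
  - destruct (proj2 HD (Cnd p q)) as [|Hn]; auto. exfalso.
    assert (O (Neg (Cnd p q))) by (apply H; split; [exists p, q; right; auto| auto]).
    apply (mcs_neg O _ HO) in H0; contradiction.
  - apply H; split; [exists p, q; left; auto|auto].
Qed.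

Lemma mcs_bigConj D c Ls : MCS D -> D c -> (forall x, In x Ls -> D x) -> D (bigConj c Ls).
Proof.
  intros HD Hc HL. apply (mcs_tautology D (c :: Ls)); auto.
  - intros x [<-|Hx]; auto.
  - intro v. apply teval_fold. intros Hall. apply teval_bigConj. split.
    + apply Hall; left; auto.
    + intros; apply Hall; right; auto.
Qed.

Lemma box_fold D As b : MCS D -> D (Bx (fold_right Impl b As)) ->
  (forall a, In a As -> D (Bx a)) -> D (Bx b).
Proof.
  intros HD. induction As as [|a As IH]; simpl; intros H1 H2; auto.
  apply IH; auto.
  eapply mcs_mp; [auto| |apply H2; left; auto].
  eapply mcs_mp; [auto| apply mcs_prv; [auto|apply Ax_K] | exact H1].
Qed.

Lemma exist_likely D p q : MCS D -> ~ D (Cnd p q) ->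
  exists O, MCS O /\ ceq O D /\ likely D p O /\ O (Neg (emb q)).
Proof.
  intros HD Hn.
  destruct (classic (derives (fun x => lits D x \/ (exists r, D (Cnd p r) /\ x = emb r)
                                      \/ x = Neg (emb q)) Bot)) as [Hd|Hnd].
  - exfalso; apply Hn. destruct Hd as [l [Hl Hp]].
    destruct (split2 (lits D) (fun x => (exists r, D (Cnd p r) /\ x = emb r) \/ x = Neg (emb q)) l Hl)
      as [Ls [e [HLs [He Hcov]]]].
    assert (HPs: exists Ps, (forall r, In r Ps -> D (Cnd p r)) /\
               forall x, In x e -> (exists r, In r Ps /\ x = emb r) \/ x = Neg (emb q)).
    { clear - He. induction e as [|x e IH].
      - exists []; split; intros ? [].
      - destruct IH as [Ps [H1 H2]]; [intros; apply He; right; auto|].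
        destruct (He x (or_introl eq_refl)) as [[r [Hr Hx]]|Hx].
        + exists (r :: Ps). split.
          * intros r' [<-|Hr']; auto.
          * intros y [<-|Hy].
            -- left; exists r; simpl; auto.
            -- destruct (H2 y Hy) as [[r' [Hr' Hy']]|Hy']; [left; exists r'; simpl; auto| right; auto].
        + exists Ps; split; auto. intros y [<-|Hy]; auto. }
    destruct HPs as [Ps [HPs Hcov2]].
    assert (HB : D (bigConj (Cnd p p) Ls)).
    { apply mcs_bigConj; auto; [apply mcs_prv; auto; apply Ax_id | intros x Hx; apply HLs; auto]. }
    assert (H1 : Prv (Impl (bigConj (Cnd p p) Ls)
                   (emb (CIff p (CAnd p (CImp (bigCAnd p Ps) q)))))).
    { eapply prv_mp_taut; [exact Hp|]. intro v. simpl.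
      destruct (teval v (fold_right Impl Bot l)) eqn:E1; simpl; try reflexivity.
      destruct (teval v (bigConj (Cnd p p) Ls)) eqn:E2; simpl; try reflexivity.
      destruct (teval v (emb p)) eqn:Ep; simpl; try reflexivity.
      destruct (teval v (emb (bigCAnd p Ps))) eqn:Eb; simpl; try reflexivity.
      destruct (teval v (emb q)) eqn:Eq; simpl; try reflexivity.
      exfalso. rewrite teval_fold in E1.
      assert (F : teval v Bot = true).
      { apply E1. intros x Hx. destruct (Hcov x Hx) as [HxL|Hxe].
        - rewrite teval_bigConj in E2; apply E2; auto.
        - destruct (Hcov2 x Hxe) as [[r [Hr ->]]| ->].
          + rewrite teval_bigCAnd in Eb; apply Eb; auto.
          + simpl; rewrite Eq; auto. }
      simpl in F; discriminate F. }
    assert (H2 : Prv (Impl (bigConj (Cnd p p) Ls)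
                   (Cnd (CNeg (CIff p (CAnd p (CImp (bigCAnd p Ps) q)))) CBot))).
    { apply R_S5F; [exists p, p; left; auto | apply Forall_forall; intros x Hx; apply HLs; auto | exact H1]. }
    assert (H3 := mcs_mp _ _ _ HD (mcs_prv _ _ HD H2) HB).
    assert (H4 := mcs_mp _ _ _ HD (mcs_prv _ _ HD (Ax_eq p (CAnd p (CImp (bigCAnd p Ps) q))
                                                        (CAnd p (CImp (bigCAnd p Ps) q)))) H3).
    apply (mcs_iff _ _ _ HD) in H4.
    assert (H5 : D (Cnd p (CAnd p (CImp (bigCAnd p Ps) q)))) by (apply H4; apply mcs_prv; auto; apply Ax_id).
    assert (H6 : Prv (Impl (condConj p (CAnd p (CImp (bigCAnd p Ps) q)) (p :: Ps)) (Cnd p q))).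
    { apply R_RCK. apply Ax_taut. taut. }
    eapply mcs_mp; [exact HD|apply mcs_prv; [exact HD|exact H6]|].
    unfold condConj. apply mcs_bigConj; auto.
    intros x [<-|Hx]; [apply mcs_prv; auto; apply Ax_id|].
    apply in_map_iff in Hx. destruct Hx as [r [<- Hr]]; auto.
  - destruct (lindenbaum _ Hnd) as [O [HO HS]]. exists O. split; auto. split.
    + apply lit_ceq; auto; intros x Hx; apply HS; left; auto.
    + split.
      * intros r Hr; apply HS; right; left; exists r; auto.
      * apply HS; right; right; auto.
Qed.

Lemma nec_lemma D p r : MCS D ->
  (forall O, MCS O -> ceq O D -> O (emb p) -> O (emb r)) ->
  D (Cnd (CNeg (CIff p (CAnd r p))) CBot).
Proof.
  intros HD Hall.
  destruct (classic (derives (fun x => lits D x \/ x = emb p \/ x = Neg (emb r)) Bot)) as [Hd|Hnd].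
  - destruct Hd as [l [Hl Hp]].
    destruct (split2 (lits D) (fun x => x = emb p \/ x = Neg (emb r)) l Hl)
      as [Ls [e [HLs [He Hcov]]]].
    assert (HB : D (bigConj (Cnd p p) Ls)).
    { apply mcs_bigConj; auto; [apply mcs_prv; auto; apply Ax_id | intros x Hx; apply HLs; auto]. }
    assert (H1 : Prv (Impl (bigConj (Cnd p p) Ls) (emb (CIff p (CAnd r p))))).
    { eapply prv_mp_taut; [exact Hp|]. intro v. simpl.
      destruct (teval v (fold_right Impl Bot l)) eqn:E1; simpl; try reflexivity.
      destruct (teval v (bigConj (Cnd p p) Ls)) eqn:E2; simpl; try reflexivity.
      destruct (teval v (emb p)) eqn:Ep; destruct (teval v (emb r)) eqn:Er; simpl; try reflexivity.
      exfalso. rewrite teval_fold in E1.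
      assert (F : teval v Bot = true).
      { apply E1. intros x Hx. destruct (Hcov x Hx) as [HxL|Hxe].
        - rewrite teval_bigConj in E2; apply E2; auto.
        - destruct (He x Hxe) as [->| ->]; simpl; [auto| rewrite Er; auto]. }
      simpl in F; discriminate F. }
    assert (H2 : Prv (Impl (bigConj (Cnd p p) Ls) (Cnd (CNeg (CIff p (CAnd r p))) CBot))).
    { apply R_S5F; [exists p, p; left; auto | apply Forall_forall; intros x Hx; apply HLs; auto | exact H1]. }
    exact (mcs_mp _ _ _ HD (mcs_prv _ _ HD H2) HB).
  - exfalso. destruct (lindenbaum _ Hnd) as [O [HO HS]].
    assert (HOD : ceq O D) by (apply lit_ceq; auto; intros x Hx; apply HS; left; auto).
    assert (H1 : O (emb r)) by (apply Hall; auto; apply HS; right; left; auto).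
    assert (H2 : O (Neg (emb r))) by (apply HS; right; right; auto).
    apply (mcs_neg _ _ HO) in H2. contradiction.
Qed.

Definition nxt (i : three) : three := match i with i0 => i1 | i1 => i2 | i2 => i0 end.

Theorem lemma3 :
  forall (I : fset -> Prop), rep_set I ->
  forall (s : state), inSS I s ->
  forall a : fT, sat I s a <-> st_D s a.
Proof.
  intros I HI s Hs a. revert s Hs.
  induction a as [n| |p q|a IH|a1 IH1 a2 IH2|a1 IH1 a2 IH2|a1 IH1 a2 IH2|a1 IH1 a2 IH2|a IH];
    intros s Hs; pose proof Hs as [G [HG [HD HDG]]]; simpl.
  - tauto.
  - split; [tauto | apply mcs_nobot; auto].
  - split.
    + intro Hsat. destruct (proj2 HD (Cnd p q)) as [Hc|Hn]; auto. exfalso.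
      assert (Hnc : ~ st_D s (Cnd p q)) by (apply (mcs_neg _ _ HD); auto).
      destruct (exist_likely _ p q HD Hnc) as [O [HO [HOD [Hlik HOq]]]].
      assert (HpO : O (emb p)) by (apply Hlik; apply mcs_prv; auto; apply Ax_id).
      assert (HOG : ceq O G) by (eapply ceq_trans; eauto).
      assert (Hext : ext G q (St O p i0)).
      { apply (Hsat G HG (conj HD HDG)). split.
        - split; [split; auto| apply (satCL_mcs (St O p i0) p HO); exact HpO].
        - intros y [[HyM HyG] Hyp] _. left. simpl. split.
          + intros r Hr. apply Hlik. apply HDG; auto.
          + apply (satCL_mcs y p HyM); auto. }
      destruct Hext as [_ Hq]. apply (satCL_mcs (St O p i0) q HO) in Hq. simpl in Hq.
      apply (mcs_neg _ _ HO) in HOq. contradiction.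
    + intros Hc G' HG' [_ HDG'] v [[[HvM HvG] Hvp] Hmost].
      destruct v as [O psi i]. simpl in *.
      apply (satCL_mcs (St O psi i) p HvM) in Hvp. simpl in Hvp.
      assert (Hkey : forall O', MCS O' -> ceq O' (st_D s) -> O' (emb p) ->
                       likely G' psi O /\ O' (emb psi)).
      { intros O' HO' HO'D HO'p.
        assert (H1 : geq G' (St O psi i) (St O' psi (nxt i))).
        { apply Hmost.
          - split; [split; auto; eapply ceq_trans; eauto|].
            apply (satCL_mcs (St O' psi (nxt i)) p HO'); auto.
          - unfold geq; simpl. right.
            destruct i; simpl; [left|right;left|right;right]; split; reflexivity. }
        unfold geq in H1; simpl in H1.
        destruct H1 as [H1|[H1|[H1|H1]]]; [exact H1| | |];
          exfalso; destruct i; destruct H1; simpl in *; discriminate. }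
      assert (Hlik : likely G' psi O).
      { apply (Hkey O); auto. eapply ceq_trans; [exact HvG|apply ceq_sym; exact HDG']. }
      assert (Hnec := nec_lemma (st_D s) p psi HD
                        (fun O' HO' HO'D HO'p => proj2 (Hkey O' HO' HO'D HO'p))).
      assert (H4 := mcs_mp _ _ _ HD (mcs_prv _ _ HD (Ax_eq p (CAnd psi p) q)) Hnec).
      apply (mcs_iff _ _ _ HD) in H4. apply H4 in Hc.
      assert (H5 := mcs_mp _ _ _ HD (mcs_prv _ _ HD (Ax_sh q psi p)) Hc).
      apply HDG' in H5. apply Hlik in H5. simpl in H5.
      assert (Hq := mcs_mp _ _ _ HvM H5 Hvp).
      split; [split; auto|]. apply (satCL_mcs (St O psi i) q HvM); auto.
  - split.
    + intros Hsat. destruct (proj2 HD (Bx a)) as [|Hn]; auto. exfalso.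
      destruct (classic (derives (fun x => st_D s (Bx x) \/ x = Neg a) Bot)) as [Hd|Hnd].
      * destruct Hd as [l [Hl Hp]].
        destruct (split2 (fun x => st_D s (Bx x)) (fun x => x = Neg a) l Hl)
          as [lp [lq [H1 [H2 H3]]]].
        assert (Hpr : Prv (fold_right Impl a lp)).
        { eapply prv_mp_taut; [exact Hp|]. intro v. simpl.
          destruct (teval v (fold_right Impl Bot l)) eqn:E1; simpl; try reflexivity.
          apply teval_fold. intros Hall.
          destruct (teval v a) eqn:Ea; auto. exfalso. rewrite teval_fold in E1.
          assert (F : teval v Bot = true).
          { apply E1. intros x Hx. destruct (H3 x Hx) as [Hy|Hy]; auto.
            rewrite (H2 x Hy). simpl. rewrite Ea. auto. }
          simpl in F; discriminate F. }
        assert (HB : st_D s (Bx a)).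
        { apply (box_fold _ lp); auto. apply mcs_prv; auto. apply R_Nec; auto. }
        apply (mcs_neg _ _ HD) in Hn. contradiction.
      * destruct (lindenbaum _ Hnd) as [O [HO HS]].
        destruct (proj1 (proj2 HI) O HO) as [G0 [HG0 HOG0]].
        assert (Hv : inSS I (St O CBot i0)) by (exists G0; split; auto; split; auto).
        assert (HR : Rel s (St O CBot i0)) by (intros x Hx; simpl; apply HS; left; auto).
        assert (Ha := proj1 (IH _ Hv) (Hsat _ Hv HR)). simpl in Ha.
        assert (Hna : O (Neg a)) by (apply HS; right; auto).
        apply (mcs_neg _ _ HO) in Hna. contradiction.
    + intros Hb v Hv HR. apply (IH v Hv). apply HR. auto.
  - pose proof (IH1 s Hs); pose proof (IH2 s Hs); pose proof (mcs_conj _ a1 a2 HD); tauto.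
  - pose proof (IH1 s Hs); pose proof (IH2 s Hs); pose proof (mcs_disj _ a1 a2 HD); tauto.
  - pose proof (IH1 s Hs); pose proof (IH2 s Hs); pose proof (mcs_impl _ a1 a2 HD); tauto.
  - pose proof (IH1 s Hs); pose proof (IH2 s Hs); pose proof (mcs_iff _ a1 a2 HD); tauto.
  - pose proof (IH s Hs); pose proof (mcs_neg _ a HD); tauto.
Qed.
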